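(* Let $\mathsf{C}\subset V$ be a proper cone, $\phi$ in the interior of $\mathsf{C}^*$, $k\ge1$, and assume $\gamma_k^\phi$ is entanglement-breaking (so that $K_\phi=\mathsf{C}\cap\phi^{-1}(1)$ is a polytope). Then $\gamma_k^\phi$, as a tensor in $(V^* )^{\otimes k}\otimes V$, belongs to the cone generated by the elements $\psi_{F_1}\otimes\cdots\otimes\psi_{F_k}\otimes x$ where $(F_1,\dots,F_k,x)\in\mathcal F(K_\phi)^k\times\mathcal V(K_\phi)$ is admissible.
   Context: Proper cone: closed convex cone in a finite-dimensional real vector space, containing no line, not contained in a hyperplane; $\mathsf{C}^*$ is its dual cone; $\mathsf{C}_1\otimes_{\min}\mathsf{C}_2=\mathrm{conv}\{x\otimes y:x\in\mathsf{C}_1,y\in\mathsf{C}_2\}$. $\gamma_k^\phi=\frac1k\sum_{j=1}^k\phi^{\otimes(j-1)}\otimes\mathrm{Id}_V\otimes\phi^{\otimes(k-j)}$, viewed as a tensor in $(V^* )^{\otimes k}\otimes V$, is entanglement-breaking if it belongs to $(\mathsf{C}^* )^{\otimes_{\min}k}\otimes_{\min}\mathsf{C}$. For a polytope $P$, $\mathcal V(P)$ is its vertex set and $\mathcal F(P)$ its set of facets. For each facet $F\in\mathcal F(K_\phi)$, $\psi_F\in\mathsf{C}^*$ is a linear form with $F=K_\phi\cap\ker\psi_F$ (unique up to positive scalar). The avoiding set of a vertex $x$ is $\mathrm{Av}(x)=\{F\in\mathcal F(K_\phi):x\notin F\}$, and a tuple $(F_1,\dots,F_k,x)\in\mathcal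 F(K_\phi)^k\times\mathcal V(K_\phi)$ is admissible if $\mathrm{Av}(x)\subset\{F_1,\dots,F_k\}$. *)

(* Defs.v *)
From HB Require Import structures.
From mathcomp Require Import all_boot all_order all_algebra.
From mathcomp Require Import all_classical all_reals all_analysis.
Set Implicit Arguments. Unset Strict Implicit. Unset Printing Implicit Defensive.
Import Order.TTheory GRing.Theory Num.Theory.
Import numFieldNormedType.Exports.
Local Open Scope classical_set_scope.
Local Open Scope ring_scope.

(* V = R^n, realised as row vectors 'rV[R]_n; V^dual is identified with 'rV[R]_n
   through the standard pairing below (phi x = \sum_i phi_i x_i). *)
Section Defs.
Variable R : realType.

Definition pairing (n : nat) (phi x : 'rV[R]_n) : R := \sum_(i < n) phi 0 i * x 0 i.

Definition is_cone (n : nat) (C : set 'rV[R]_n) : Prop :=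
  C 0 /\ (forall x y, C x -> C y -> C (x + y)) /\
  (forall (a : R) x, 0 <= a -> C x -> C (a *: x)).

Definition proper_cone (n : nat) (C : set 'rV[R]_n) : Prop :=
  [/\ is_cone C, closed C,
      (forall x, C x -> C (- x) -> x = 0) &
      (forall a : 'rV[R]_n, (forall x, C x -> pairing a x = 0) -> a = 0)].

Definition dual_cone (n : nat) (C : set 'rV[R]_n) : set 'rV[R]_n :=
  [set a | forall x, C x -> 0 <= pairing a x].

(* Tensors in (V^dual)^{[tensor]k} [tensor] V, represented by their coordinates in the
   standard basis: index (f, i) with f : 'I_k -> 'I_n (the k dual factors)
   and i : 'I_n (the last factor V). *)
Definition tidx (k n : nat) := ({ffun 'I_k -> 'I_n} * 'I_n)%type.
Definition tensor (k n : nat) := {ffun tidx k n -> R}.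

Definition etensor (k n : nat) (psis : 'I_k -> 'rV[R]_n) (x : 'rV[R]_n)
  : tensor k n :=
  [ffun p : tidx k n => (\prod_(j < k) psis j 0 (p.1 j)) * x 0 p.2].

(* gamma_k^phi = 1/k sum_j phi^{[tensor](j-1)} [tensor] Id_V [tensor] phi^{[tensor](k-j)},
   where Id_V = sum_a e_a^* [tensor] e_a sits in the j-th dual factor and the
   final V factor. *)
Definition gamma (k n : nat) (phi : 'rV[R]_n) : tensor k n :=
  [ffun p : tidx k n => k%:R^-1 *
     \sum_(j < k) ((\prod_(l < k | l != j) phi 0 (p.1 l)) * (p.1 j == p.2)%:R)].

(* (C^dual)^{[tensor]_min k} [tensor]_min C : convex hull of elementary tensors
   psi_1 [tensor] ... [tensor] psi_k [tensor] x with psi_j in C^dual and x in C *)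

Definition min_tensor_cone (k n : nat) (C : set 'rV[R]_n) : set (tensor k n) :=
  [set t | exists m (lam : 'I_m -> R) (psis : 'I_m -> 'I_k -> 'rV[R]_n)
             (xs : 'I_m -> 'rV[R]_n),
     [/\ (forall i, 0 <= lam i), \sum_(i < m) lam i = 1,
         (forall i j, dual_cone C (psis i j)), (forall i, C (xs i)) &
         t = \sum_(i < m) lam i *: etensor (psis i) (xs i)]].


Definition entanglement_breaking (k n : nat) (C : set 'rV[R]_n) (phi : 'rV[R]_n)
  : Prop := @min_tensor_cone k n C (@gamma k n phi).


Definition cone_gen (k n : nat) (S : set (tensor k n)) : set (tensor k n) :=
  [set t | exists m (mu : 'I_m -> R) (ts : 'I_m -> tensor k n),
     [/\ (forall i, 0 <= mu i), (forall i, S (ts i)) &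
         t = \sum_(i < m) mu i *: ts i]].

Definition Kphi (n : nat) (C : set 'rV[R]_n) (phi : 'rV[R]_n) : set 'rV[R]_n :=
  [set x | C x /\ pairing phi x = 1].

(* faces of a (convex) set K (as for polytopes, faces are the sets cut out
   by valid linear inequalities; this includes the empty face and K) *)
Definition face (n : nat) (K F : set 'rV[R]_n) : Prop :=
  exists (a : 'rV[R]_n) (c : R),
    (forall x, K x -> c <= pairing a x) /\ F = [set x | K x /\ pairing a x = c].

Definition facet (n : nat) (K F : set 'rV[R]_n) : Prop :=
  [/\ face K F, F <> K &
      forall G, face K G -> F `<=` G -> G = F \/ G = K].

Definition vertex (n : nat) (K : set 'rV[R]_n) (x : 'rV[R]_n) : Prop :=
  face K [set x].

Definition admissible (k n : nat) (K : set 'rV[R]_n)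
  (Fs : 'I_k -> set 'rV[R]_n) (x : 'rV[R]_n) : Prop :=
  [/\ (forall j, facet K (Fs j)), vertex K x &
      forall F, facet K F -> ~ F x -> exists j, Fs j = F].

End Defs.

Arguments gamma {R} k {n} phi.
Arguments min_tensor_cone {R} k {n} C.
Arguments entanglement_breaking {R} k {n} C phi.

(* Main.v *)
Require Import Defs.
From HB Require Import structures.
From mathcomp Require Import all_boot all_order all_algebra.
From mathcomp Require Import all_classical all_reals all_analysis.
From mathcomp Require Import ring lra.
Import Order.TTheory GRing.Theory Num.Theory.
Import numFieldNormedType.Exports.
Local Open Scope classical_set_scope.
Local Open Scope ring_scope.

Section Basic.
Variable R : realType.
Variable n : nat.
Implicit Types a b x y : 'rV[R]_n.

Lemma pairingC a x : pairing a x = pairing x a.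
Proof. by apply: eq_bigr => i _; rewrite mulrC. Qed.

Lemma pairingDl a b x : pairing (a + b) x = pairing a x + pairing b x.
Proof. by rewrite /pairing -big_split; apply: eq_bigr => i _; rewrite !mxE mulrDl. Qed.

Lemma pairingZl (c : R) a x : pairing (c *: a) x = c * pairing a x.
Proof. by rewrite /pairing mulr_sumr; apply: eq_bigr => i _; rewrite !mxE mulrA. Qed.

Lemma pairing0l x : pairing 0 x = 0.
Proof. by rewrite /pairing big1 // => i _; rewrite mxE mul0r. Qed.

Lemma pairingNl a x : pairing (- a) x = - pairing a x.
Proof. by rewrite -scaleN1r pairingZl mulN1r. Qed.

Lemma pairingBl a b x : pairing (a - b) x = pairing a x - pairing b x.
Proof. by rewrite pairingDl pairingNl. Qed.

Lemma pairing_suml (I : Type) (r : seq I) (P : pred I) (F : I -> 'rV[R]_n) x :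
  pairing (\sum_(i <- r | P i) F i) x = \sum_(i <- r | P i) pairing (F i) x.
Proof.
elim/big_rec2: _ => [|i y1 y2 _ <-]; first by rewrite pairing0l.
by rewrite pairingDl.
Qed.

Lemma pairingDr a x y : pairing a (x + y) = pairing a x + pairing a y.
Proof. by rewrite pairingC pairingDl !(pairingC a). Qed.
Lemma pairingZr (c : R) a x : pairing a (c *: x) = c * pairing a x.
Proof. by rewrite pairingC pairingZl pairingC. Qed.
Lemma pairing0r a : pairing a 0 = 0.
Proof. by rewrite pairingC pairing0l. Qed.
Lemma pairingNr a x : pairing a (- x) = - pairing a x.
Proof. by rewrite pairingC pairingNl pairingC. Qed.
Lemma pairingBr a x y : pairing a (x - y) = pairing a x - pairing a y.
Proof. by rewrite pairingDr pairingNr. Qed.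
Lemma pairing_sumr (I : Type) (r : seq I) (P : pred I) (F : I -> 'rV[R]_n) a :
  pairing a (\sum_(i <- r | P i) F i) = \sum_(i <- r | P i) pairing a (F i).
Proof. by rewrite pairingC pairing_suml; apply: eq_bigr => i _; rewrite pairingC. Qed.

Lemma pairing_self_ge0 a : 0 <= pairing a a.
Proof. by apply: sumr_ge0 => i _; rewrite -expr2 sqr_ge0. Qed.

Lemma pairing_self_eq0 a : pairing a a = 0 -> a = 0.
Proof.
move=> h; apply/rowP => i; rewrite mxE.
have H : \sum_(j < n | true) a 0 j ^+ 2 = 0.
  by rewrite -[RHS]h /pairing; apply: eq_bigr => j _; rewrite expr2.
have := psumr_eq0P (fun j _ => (sqr_ge0 (a 0 j))) H (i := i) isT.
by move/eqP; rewrite sqrf_eq0 => /eqP.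
Qed.

Lemma pairing_inj x y : (forall a, pairing a x = pairing a y) -> x = y.
Proof.
move=> h; apply/eqP; rewrite -subr_eq0; apply/eqP; apply: pairing_self_eq0.
by rewrite pairingBr h subrr.
Qed.

Lemma pairing_mx a x : pairing a x = (a *m x^T) 0 0.
Proof. by rewrite mxE; apply: eq_bigr => i _; rewrite !mxE. Qed.

End Basic.
Arguments pairingC {R n}. Arguments pairingDl {R n}. Arguments pairingZl {R n}.
Arguments pairing0l {R n}. Arguments pairingNl {R n}. Arguments pairingBl {R n}.
Arguments pairing_suml {R n I}. Arguments pairingDr {R n}. Arguments pairingZr {R n}.
Arguments pairing0r {R n}. Arguments pairingNr {R n}. Arguments pairingBr {R n}.
Arguments pairing_sumr {R n I}. Arguments pairing_self_ge0 {R n}.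
Arguments pairing_self_eq0 {R n}. Arguments pairing_inj {R n}. Arguments pairing_mx {R n}.

Section NComb.
Variable R : realType.
Variable V : lmodType R.
Implicit Types A P : set V.

Definition ncomb A (v : V) := exists q (mu : 'I_q -> R) (w : 'I_q -> V),
  [/\ forall l, 0 <= mu l, forall l, 0 < mu l -> A (w l) & v = \sum_l mu l *: w l].

Definition cclosed P := [/\ P 0, (forall u v, P u -> P v -> P (u + v)) &
   (forall c u, 0 <= c -> P u -> P (c *: u))].

Lemma cclosed_sum P q (mu : 'I_q -> R) (w : 'I_q -> V) : cclosed P ->
  (forall l, 0 <= mu l) -> (forall l, 0 < mu l -> P (w l)) ->
  P (\sum_l mu l *: w l).
Proof.
case=> P0 PD PZ; elim: q mu w => [|q IH] mu w mu0 Pw; first by rewrite big_ord0.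
rewrite big_ord_recr /=; apply: PD.
  by apply: IH => // l; apply: Pw.
have := mu0 ord_max; rewrite le0r => /orP[/eqP->|/Pw h]; first by rewrite scale0r.
by apply: PZ.
Qed.

Lemma ncomb_sub A P : cclosed P -> A `<=` P -> ncomb A `<=` P.
Proof.
move=> cP AP v [q [mu [w [mu0 Aw ->]]]]; apply: cclosed_sum => // l /Aw; exact: AP.
Qed.

Lemma ncomb_gen A v : A v -> ncomb A v.
Proof.
move=> Av; exists 1%N, (fun=> 1), (fun=> v); split => //.
by rewrite big_ord1 scale1r.
Qed.

Lemma ncomb_cclosed A : cclosed (ncomb A).
Proof.
split.
- by exists 0%N, (fun=> 0), (fun=> 0); split; [by case|by case|by rewrite big_ord0].
- move=> u v [q1 [mu1 [w1 [m1 A1 ->]]]] [q2 [mu2 [w2 [m2 A2 ->]]]].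
  exists (q1 + q2)%N, (fun i => match fintype.split i with inl l => mu1 l | inr l => mu2 l end),
    (fun i => match fintype.split i with inl l => w1 l | inr l => w2 l end); split.
  + by move=> i; case: fintype.split.
  + by move=> i; case: fintype.split => l; [apply: A1|apply: A2].
  + rewrite big_split_ord /=; congr (_ + _); apply: eq_bigr => l _.
      by rewrite (unsplitK (inl l)).
    by rewrite (unsplitK (inr l)).
- move=> c u c0 [q [mu [w [m0 Aw ->]]]].
  exists q, (fun l => c * mu l), w; split.
  + by move=> l; apply: mulr_ge0.
  + move=> l h; apply: Aw; rewrite lt_neqAle m0 andbT; apply/eqP => e.
    by move: h; rewrite -e mulr0 ltxx.
  + by rewrite scaler_sumr; apply: eq_bigr => l _; rewrite scalerA.
Qed.

Lemma ncomb_mono A B : A `<=` B -> ncomb A `<=` ncomb B.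
Proof. by move=> AB; apply: ncomb_sub; [exact: ncomb_cclosed|move=> v /AB; exact: ncomb_gen]. Qed.

Lemma ncomb_trans A B : A `<=` ncomb B -> ncomb A `<=` ncomb B.
Proof. by move=> AB; apply: ncomb_sub => //; exact: ncomb_cclosed. Qed.

End NComb.
Arguments ncomb {R V}. Arguments cclosed {R V}. Arguments cclosed_sum {R V}.
Arguments ncomb_sub {R V}. Arguments ncomb_gen {R V}. Arguments ncomb_cclosed {R V}.
Arguments ncomb_mono {R V}. Arguments ncomb_trans {R V}.

Section Farkas.
Variable R : realType.

Lemma widen_lift m (j : 'I_m) : widen_ord (leqnSn m) j = lift ord_max j.
Proof. by apply: val_inj; rewrite /= /bump leqNgt ltn_ord. Qed.

Lemma farkas n m (a : 'I_m -> 'rV[R]_n) (b : 'rV[R]_n) :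
  (forall x, (forall i, 0 <= pairing (a i) x) -> 0 <= pairing b x) ->
  exists lam : 'I_m -> R, (forall i, 0 <= lam i) /\ b = \sum_i lam i *: a i.
Proof.
elim: m a b => [|m IH] a b H.
  exists (fun=> 0); split => //; rewrite big_ord0.
  have := H (- b) (fun i => match i with @Ordinal _ _ hi => False_ind _ (notF hi) end).
  rewrite pairingNr oppr_ge0 => h; apply: pairing_self_eq0.
  by apply/eqP; rewrite eq_le h pairing_self_ge0.
pose a' (j : 'I_m) := a (lift ord_max j).
pose am := a ord_max.
have allI (P : 'I_m.+1 -> Prop) : (forall j, P (lift ord_max j)) -> P ord_max -> forall i, P i.
  by move=> h1 h2 i; case: (unliftP ord_max i) => [j ->|->].
have sumE (F : 'I_m.+1 -> 'rV[R]_n) : \sum_i F i = \sum_j F (lift ord_max j) + F ord_max.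
  by rewrite big_ord_recr /=; congr (_ + _); apply: eq_bigr => j _; rewrite widen_lift.
case: (pselect (forall x, (forall j, 0 <= pairing (a' j) x) -> 0 <= pairing b x)) => [H'|nH].
  have [lam [lam0 ->]] := IH a' b H'.
  exists (fun i => oapp lam 0 (unlift ord_max i)); split.
    by move=> i; case: (unliftP ord_max i) => [j _|_] /=.
  rewrite sumE unlift_none scale0r addr0; apply: eq_bigr => j _; by rewrite liftK.
have [xb [hxb hbx]] : exists xb, (forall j, 0 <= pairing (a' j) xb) /\ pairing b xb < 0.
  case: (pselect (exists xb, (forall j, 0 <= pairing (a' j) xb) /\ pairing b xb < 0)) => [//|nE].
  exfalso; apply: nH => x hx; rewrite leNgt; apply/negP => bx.
  by apply: nE; exists x.
pose s := pairing am xb.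
have s0 : s < 0.
  rewrite ltNge; apply/negP => s0; have := H xb.
  move=> h; have : 0 <= pairing b xb.
    apply: h => i; case: (unliftP ord_max i) => [j ->|->]; [exact: hxb|exact: s0].
  by rewrite leNgt hbx.
have sn0 : s != 0 by rewrite lt_eqF.
pose a'' j := a' j - (pairing (a' j) xb / s) *: am.
pose b'' := b - (pairing b xb / s) *: am.
have H'' : forall x, (forall j, 0 <= pairing (a'' j) x) -> 0 <= pairing b'' x.
  move=> x hx; pose x' := x - (pairing am x / s) *: xb.
  have e1 : pairing am x' = 0.
    by rewrite /x' pairingBr pairingZr -/s mulfVK // subrr.
  have e2 j : pairing (a' j) x' = pairing (a'' j) x.
    by rewrite /x' /a'' pairingBr pairingBl pairingZr pairingZl; congr (_ - _); rewrite [LHS]mulrC mulrA [RHS]mulrAC.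
  have e3 : pairing b x' = pairing b'' x.
    by rewrite /x' /b'' pairingBr pairingBl pairingZr pairingZl; congr (_ - _); rewrite [LHS]mulrC mulrA [RHS]mulrAC.
  rewrite -e3; apply: H => i; case: (unliftP ord_max i) => [j ->|->].
    by rewrite -/(a' j) (e2 j).
  by rewrite -/am e1.
have [lam [lam0 eb]] := IH a'' b'' H''.
pose cm := (pairing b xb - \sum_j lam j * pairing (a' j) xb) / s.
exists (fun i => oapp lam cm (unlift ord_max i)); split.
  move=> i; case: (unliftP ord_max i) => [j _|_] //=.
  rewrite /cm -mulrNN -invrN; apply: divr_ge0; last by rewrite oppr_ge0 ltW.
  rewrite opprB subr_ge0; apply: le_trans (ltW hbx) _.
  by apply: sumr_ge0 => j _; apply: mulr_ge0.
rewrite sumE unlift_none.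
have -> : \sum_j oapp lam cm (unlift ord_max (lift ord_max j)) *: a (lift ord_max j)
   = \sum_j lam j *: a' j by apply: eq_bigr => j _; rewrite liftK.
have : b = b'' + (pairing b xb / s) *: am by rewrite /b'' subrK.
move=> ->; rewrite eb /a'' /cm.
have -> : \sum_j lam j *: (a' j - pairing (a' j) xb / s *: am) =
   \sum_j lam j *: a' j - (\sum_j lam j * pairing (a' j) xb / s) *: am.
  rewrite scaler_suml -sumrB; apply: eq_bigr => j _.
  by rewrite scalerBr scalerA mulrA.
rewrite -addrA; congr (_ + _); rewrite addrC -scalerBl /=; congr (_ *: _).
by rewrite mulrBl; congr (_ - _); rewrite mulr_suml.
Qed.

End Farkas.

Section LinAlg.
Variable R : realType.
Variable n : nat.

Lemma tr0 q (M : 'M[R]_(q, n)) (z : 'rV[R]_n) : (M *m z^T = 0) <-> (z *m M^T = 0).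
Proof.
split => h.
  by apply: trmx_inj; rewrite trmx_mul trmxK h trmx0.
by apply: trmx_inj; rewrite trmx_mul trmxK h trmx0.
Qed.

Lemma kerP q (M : 'M[R]_(q, n)) (z : 'rV[R]_n) : (M *m z^T = 0) <-> (z <= kermx M^T)%MS.
Proof. by rewrite sub_kermx tr0; split => [->|/eqP]. Qed.

Lemma rank_lt_ann q (M : 'M[R]_(q, n)) (z : 'rV[R]_n) :
  z != 0 -> M *m z^T = 0 -> (\rank M < n)%N.
Proof.
move=> z0 /kerP zk; have := mxrankS zk; rewrite mxrank_ker mxrank_tr rank_rV z0.
by rewrite subn_gt0.
Qed.

Lemma LA1 q (M : 'M[R]_(q, n)) (y z : 'rV[R]_n) : \rank M = n.-1 -> z != 0 ->
  M *m z^T = 0 -> M *m y^T = 0 -> exists c, y = c *: z.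
Proof.
move=> rM z0 /kerP zk /kerP yk.
have n0 : (0 < n)%N.
  case: n M y z rM z0 {zk yk} => // M y z _; by rewrite (thinmx0 z) eqxx.
have rk : \rank (kermx M^T) = 1%N by rewrite mxrank_ker mxrank_tr rM; case: (n) n0 => // k _; rewrite /= subSnn.
have kz : (kermx M^T <= z)%MS.
  have := mxrank_leqif_sup zk; rewrite rk rank_rV z0 => /leqifP.
  by case: ifP.
have /submxP [D ->] := submx_trans yk kz.
by exists (D 0 0); rewrite {1}(mx11_scalar D) mul_scalar_mx.
Qed.

Lemma ker_nz q (A : 'M[R]_(q, n)) : (\rank A < n)%N -> exists d : 'rV[R]_n, d != 0 /\ A *m d^T = 0.
Proof.
move=> rA.
have : kermx A^T != 0.
  by rewrite -mxrank_eq0 mxrank_ker mxrank_tr -lt0n subn_gt0.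
case/rowV0Pn => d dk d0; exists d; split => //; exact/kerP.
Qed.

Definition tightmx p (g : 'I_p -> 'rV[R]_n) (psi : 'rV[R]_n) : 'M[R]_(p, n) :=
  \matrix_(i, j) (if pairing psi (g i) == 0 then g i 0 j else 0).
Arguments tightmx {p}.


Lemma tightmxE p (g : 'I_p -> 'rV[R]_n) psi y i :
  (tightmx g psi *m y^T) i 0 = if pairing psi (g i) == 0 then pairing (g i) y else 0.
Proof.
rewrite mxE; case: ifP => h.
  by apply: eq_bigr => j _; rewrite !mxE h.
by apply: big1 => j _; rewrite !mxE h mul0r.
Qed.

Lemma tightmx_ann p (g : 'I_p -> 'rV[R]_n) psi y :
  (tightmx g psi *m y^T = 0) <-> (forall i, pairing psi (g i) = 0 -> pairing (g i) y = 0).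
Proof.
split => h.
  move=> i e; have := congr1 (fun M : 'M[R]_(p, 1) => M i 0) h.
  by rewrite /= tightmxE e eqxx mxE.
apply/matrixP => i j; rewrite (ord1 j) tightmxE mxE.
by case: ifP => // /eqP /h.
Qed.

End LinAlg.
Arguments tr0 {R n q}. Arguments kerP {R n q}. Arguments rank_lt_ann {R n q M z}.
Arguments LA1 {R n q M y z}. Arguments ker_nz {R n q A}. Arguments tightmx {R n p}.
Arguments tightmxE {R n p}. Arguments tightmx_ann {R n p}.

Lemma rank_col_le {F : fieldType} {m1 m2 n} (A : 'M[F]_(m1,n)) (B : 'M[F]_(m2,n)) :
  (\rank (col_mx A B) <= \rank A + \rank B)%N.
Proof. rewrite -addsmxE. exact: mxrank_adds_leqif. Qed.

Section RI.
Variable R : realType.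
Variable n p : nat.
Variable g : 'I_p -> 'rV[R]_n.
Hypothesis span : forall d, (forall i, pairing d (g i) = 0) -> d = 0.

Definition inD (psi : 'rV[R]_n) := forall i, 0 <= pairing psi (g i).
Definition extr psi := [/\ inD psi, psi != 0 & \rank (tightmx g psi) = n.-1].

Definition csum := \sum_i g i.

Lemma posc psi : inD psi -> psi != 0 -> 0 < pairing psi csum.
Proof.
move=> hD psi0; rewrite /csum pairing_sumr lt_neqAle sumr_ge0 // andbT.
apply/eqP => /esym e; move/eqP: psi0; apply; apply: span => i.
by apply: (psumr_eq0P (fun i _ => hD i) e).
Qed.

Lemma row_tight psi i : row i (tightmx g psi) = if pairing psi (g i) == 0 then g i else 0.
Proof. by apply/rowP => j; rewrite !mxE; case: ifP => //; rewrite mxE. Qed.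

Lemma tight_self psi : tightmx g psi *m psi^T = 0.
Proof. by apply/tightmx_ann => i e; rewrite pairingC. Qed.

Lemma step psi d : inD psi -> tightmx g psi *m d^T = 0 ->
  pairing d csum = 0 -> d != 0 ->
  exists t, [/\ 0 < t, inD (psi + t *: d) &
   (\rank (tightmx g psi) < \rank (tightmx g (psi + t *: d)))%N].
Proof.
move=> hD /tightmx_ann dT dc d0.
have [i0 hi0] : exists i, pairing d (g i) < 0.
  case: (pselect (exists i, pairing d (g i) < 0)) => // ne; exfalso.
  have dD : inD d by move=> i; rewrite leNgt; apply/negP => h; apply: ne; exists i.
  by have := @posc d dD d0; rewrite dc ltxx.
pose P := fun i => pairing d (g i) < 0.
pose F := fun i => pairing psi (g i) / - pairing d (g i).
case: (@Order.TotalTheory.arg_minP _ _ _ i0 P F hi0) => i1 Pi1 Hmin.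
have nt i : P i -> pairing psi (g i) != 0.
  move=> Pi; apply/eqP => e; have := dT i e; rewrite pairingC => e'.
  by move: Pi; rewrite /P e' ltxx.
have pos i : P i -> 0 < pairing psi (g i).
  by move=> Pi; rewrite lt_neqAle hD andbT eq_sym nt.
have dpos i : P i -> 0 < - pairing d (g i) by rewrite /P oppr_gt0.
set t := F i1.
have t0 : 0 < t by apply: divr_gt0; [apply: pos|apply: dpos].
exists t; split => //.
  move=> i; rewrite pairingDl pairingZl.
  case: (leP 0 (pairing d (g i))) => h.
    by apply: addr_ge0 => //; apply: mulr_ge0 => //; apply: ltW.
  have Pi : P i by [].
  have := Hmin i Pi; rewrite /F -/t => ti.
  by rewrite -[X in _ + X]opprK -mulrN subr_ge0 -ler_pdivlMr ?dpos.
have e1 : pairing (psi + t *: d) (g i1) = 0.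
  by rewrite pairingDl pairingZl /t /F invrN mulrN mulNr divfK ?subrr // lt_eqF.
set psi' := psi + t *: d.
have sub : (tightmx g psi <= tightmx g psi')%MS.
  apply/row_subP => i; rewrite row_tight; case: ifP => [/eqP e|_]; last by rewrite sub0mx.
  have : pairing psi' (g i) == 0.
    by rewrite /psi' pairingDl pairingZl e (pairingC d) dT // mulr0 addr0.
  by move=> h; rewrite -[X in (X <= _)%MS](_ : row i (tightmx g psi') = g i) ?row_sub // row_tight h.
apply: rank_ltmx; rewrite ltmxE sub /=; apply/negP => sup.
have : (g i1 <= tightmx g psi)%MS.
  apply: submx_trans sup; rewrite -[X in (X <= _)%MS](_ : row i1 (tightmx g psi') = g i1) ?row_sub //.
  by rewrite row_tight e1 eqxx.
case/submxP => D eD.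
have : pairing (g i1) d = 0.
  rewrite pairing_mx eD -mulmxA.
  have -> : tightmx g psi *m d^T = 0 by apply/tightmx_ann.
  by rewrite mulmx0 mxE.
by rewrite pairingC => e; move: Pi1; rewrite /P e ltxx.
Qed.

Lemma RI psi : inD psi -> ncomb extr psi.
Proof.
have [N] := ubnP (n - \rank (tightmx g psi)); elim: N psi => // N IH psi hN hD.
have [c0 cD cZ] := ncomb_cclosed extr.
case: (eqVneq psi 0) => [->//|psi0].
have rl := rank_lt_ann psi0 (tight_self psi).
case: (eqVneq (\rank (tightmx g psi)) n.-1) => [re|rne].
  by apply: ncomb_gen; split.
have rl2 : (\rank (tightmx g psi) < n.-1)%N.
  by rewrite ltn_neqAle rne /= -ltnS prednK // (leq_ltn_trans (leq0n _) rl).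
pose A := col_mx (tightmx g psi) csum.
have [d [d0 hd]] : exists d : 'rV[R]_n, d != 0 /\ A *m d^T = 0.
  apply: ker_nz; apply: leq_ltn_trans (rank_col_le _ _) _.
  apply: leq_ltn_trans (leq_add (leqnn _) (rank_leq_row csum)) _.
  by rewrite addn1 -ltn_predRL.
move: hd; rewrite /A mul_col_mx => /eqP; rewrite col_mx_eq0 => /andP[/eqP h1 /eqP h2].
have dc : pairing d csum = 0 by rewrite pairingC pairing_mx h2 mxE.
have [t1 [t10 D1 r1]] := @step psi d hD h1 dc d0.
have h1' : tightmx g psi *m (- d)^T = 0 by rewrite linearN /= mulmxN h1 oppr0.
have dc' : pairing (- d) csum = 0 by rewrite pairingNl dc oppr0.
have d0' : - d != 0 by rewrite oppr_eq0.
have [t2 [t20 D2 r2]] := @step psi (- d) hD h1' dc' d0'.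
have rle (M : 'M[R]_(p, n)) : (\rank M <= n)%N by apply: rank_leq_col.
have hN' : (n - \rank (tightmx g psi) <= N)%N by rewrite -ltnS.
have IH1 := IH _ (leq_trans (ltn_sub2l rl r1) hN') D1.
have IH2 := IH _ (leq_trans (ltn_sub2l rl r2) hN') D2.
have -> : psi = (t2 / (t1 + t2)) *: (psi + t1 *: d) + (t1 / (t1 + t2)) *: (psi + t2 *: - d).
  rewrite !scalerDr !scalerA scalerN [t2 / _ * t1]mulrAC [t1 / _ * t2]mulrAC [t2 * t1]mulrC.
  rewrite addrACA subrr addr0 -scalerDl -mulrDl addrC divff ?scale1r //.
  by rewrite gt_eqF // addr_gt0.
apply: cD; apply: cZ.
- by apply: divr_ge0; [exact: ltW|apply: addr_ge0; exact: ltW].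
- exact: IH1.
- by apply: divr_ge0; [exact: ltW|apply: addr_ge0; exact: ltW].
- exact: IH2.
Qed.

End RI.
Arguments inD {R n p}. Arguments extr {R n p}. Arguments csum {R n p}.
Arguments posc {R n p g}. Arguments row_tight {R n p}. Arguments tight_self {R n p}.
Arguments RI {R n p g}. Arguments step {R n p g}.

Section Ev.
Variable R : realType.
Variables k n : nat.

Definition ev (t : tensor R k n) (ys : 'I_k -> 'rV[R]_n) (a : 'rV[R]_n) : R :=
  \sum_(p : tidx k n) t p * (\prod_j ys j 0 (p.1 j)) * a 0 p.2.

Lemma evE t ys a : ev t ys a =
  \sum_(f : {ffun 'I_k -> 'I_n}) \sum_(i : 'I_n) t (f, i) * (\prod_j ys j 0 (f j)) * a 0 i.
Proof. by rewrite pair_bigA; apply: eq_bigr => -[f i] _. Qed.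

Lemma ev_sum q (lam : 'I_q -> R) (ts : 'I_q -> tensor R k n) ys a :
  ev (\sum_i lam i *: ts i) ys a = \sum_i lam i * ev (ts i) ys a.
Proof.
rewrite /ev; under eq_bigr do rewrite sum_ffunE mulr_suml mulr_suml.
rewrite exchange_big; apply: eq_bigr => i _; rewrite mulr_sumr.
by apply: eq_bigr => p _; rewrite ffunE !mulrA.
Qed.

Lemma ev_etensor psis x ys a :
  ev (etensor psis x) ys a = (\prod_j pairing (psis j) (ys j)) * pairing x a.
Proof.
rewrite evE.
rewrite /pairing bigA_distr_bigA mulr_suml; apply: eq_bigr => f _.
rewrite mulr_sumr; apply: eq_bigr => i _; rewrite ffunE /= big_split /=.
by rewrite [_ * x 0 i * _]mulrAC -!mulrA.
Qed.

Lemma ev_gamma phi ys a :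
  ev (gamma k phi) ys a =
  k%:R^-1 * \sum_j (\prod_(l | l != j) pairing phi (ys l)) * pairing (ys j) a.
Proof.
rewrite evE.
have gE f i : gamma k phi (f, i) = k%:R^-1 * \sum_(j < k) (\prod_(l < k | l != j) phi 0 (f l)) * (f j == i)%:R.
  by rewrite /gamma ffunE.
have step1 f : \sum_i gamma k phi (f, i) * (\prod_j ys j 0 (f j)) * a 0 i =
    k%:R^-1 * \sum_j \sum_i (\prod_(l | l != j) phi 0 (f l)) * (f j == i)%:R *
     ((\prod_j0 ys j0 0 (f j0)) * a 0 i).
  rewrite exchange_big mulr_sumr; apply: eq_bigr => i _; rewrite gE -!mulrA.
  by congr (_ * _); rewrite mulr_suml.
rewrite (eq_bigr _ (fun f _ => step1 f)) -mulr_sumr; congr (_ * _).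
rewrite exchange_big; apply: eq_bigr => j _.
pose H (l : 'I_k) (b : 'I_n) := if l == j then ys j 0 b * a 0 b else phi 0 b * ys l 0 b.
have -> : \sum_(f : {ffun 'I_k -> 'I_n}) \sum_i (\prod_(l | l != j) phi 0 (f l)) * (f j == i)%:R *
     ((\prod_j0 ys j0 0 (f j0)) * a 0 i) = \sum_(f : {ffun 'I_k -> 'I_n}) \prod_l H l (f l).
  apply: eq_bigr => f _.
  rewrite (bigD1 (f j)) //= eqxx mulr1 [X in _ + X]big1 ?addr0; last first.
    by move=> i ne; rewrite eq_sym (negbTE ne) mulr0 mul0r.
  rewrite [X in _ * (X * _)](bigD1 j) //= [in RHS](bigD1 j) //= /H eqxx.
  rewrite [in RHS](eq_bigr (fun l => phi 0 (f l) * ys l 0 (f l))); last by move=> l /negbTE ->.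
  rewrite big_split /=.
  set P1 := \prod_(l | l != j) phi 0 (f l); set P2 := \prod_(l | l != j) ys l 0 (f l).
  by ring.
rewrite -bigA_distr_bigA (bigD1 j) //= mulrC /H eqxx; congr (_ * _).
  by apply: eq_bigr => l /negbTE ->.
Qed.

End Ev.
Arguments ev {R k n}.
Arguments evE {R k n}. Arguments ev_sum {R k n q}. Arguments ev_etensor {R k n}. Arguments ev_gamma {R k n}.

Section Multi.
Variable R : realType.
Variables k n : nat.

Definition upd (psis : 'I_k -> 'rV[R]_n) j0 (ph : 'rV[R]_n) :=
  fun j => if j == j0 then ph else psis j.

Lemma etensor_slot psis j0 q (mu : 'I_q -> R) (phs : 'I_q -> 'rV[R]_n) x :
  psis j0 = \sum_l mu l *: phs l ->
  etensor psis x = \sum_l mu l *: etensor (upd psis j0 (phs l)) x.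
Proof.
move=> e; apply/ffunP => p; rewrite sum_ffunE ffunE (bigD1 j0) //= e summxE.
rewrite !mulr_suml; apply: eq_bigr => l _; rewrite !ffunE [in RHS](bigD1 j0) //= /upd eqxx !mxE.
rewrite [in RHS](eq_bigr (fun i => psis i 0 (p.1 i))); last by move=> j /negbTE ->.
by rewrite /GRing.scale /= -!mulrA.
Qed.

Lemma etensor_x (psis : 'I_k -> 'rV[R]_n) q (mu : 'I_q -> R) (xs : 'I_q -> 'rV[R]_n) :
  etensor psis (\sum_l mu l *: xs l) = \sum_l mu l *: etensor psis (xs l).
Proof.
apply/ffunP => p; rewrite sum_ffunE ffunE summxE mulr_sumr; apply: eq_bigr => l _.
by rewrite !ffunE !mxE /GRing.scale /= mulrCA.
Qed.

Lemma etensor_ncomb (Q : set (tensor R k n)) (A : 'I_k -> set 'rV[R]_n)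
  (B : set 'rV[R]_n) psis x : cclosed Q ->
  (forall j, ncomb (A j) (psis j)) -> ncomb B x ->
  (forall phs v, (forall j, A j (phs j)) -> B v -> Q (etensor phs v)) ->
  Q (etensor psis x).
Proof.
move=> cQ hA [q [mu [xs [mu0 Bx ->]]]] hQ.
rewrite etensor_x; apply: cclosed_sum => // l /Bx Bv.
suff : forall r, forall ps, (forall j, ncomb (A j) (ps j)) ->
   (forall j : 'I_k, (r <= j)%N -> A j (ps j)) -> Q (etensor ps (xs l)).
  by move=> /(_ k psis hA); apply => j; rewrite leqNgt ltn_ord.
elim => [|r IH] ps hps hr.
  by apply: hQ => // j; apply: hr.
case: (ltnP r k) => rk; last first.
  apply: IH => // j rj; have := leq_trans rk rj; by rewrite leqNgt ltn_ord.
pose jr := Ordinal rk.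
have [q' [nu [phs [nu0 Aph eph]]]] := hps jr.
rewrite (@etensor_slot ps jr _ nu phs (xs l) eph); apply: cclosed_sum => // m /Aph Am.
apply: IH.
  move=> j; rewrite /upd; case: eqP => [->|_] //; exact: ncomb_gen.
move=> j rj; rewrite /upd; case: eqP => [->|ne] //; apply: hr.
by rewrite ltn_neqAle rj andbT; apply/eqP => e; apply: ne; apply: val_inj.
Qed.

End Multi.
Arguments etensor_ncomb {R k n}.

Lemma interior_ball {R : realType} {n} {A : set 'rV[R]_n} {phi : 'rV[R]_n} (y : 'rV[R]_n) :
  interior A phi -> exists d, 0 < d /\ A (phi - d *: y).
Proof.
move=> /nbhs_ballP [e e0 he].
have y0 : 0 <= `|y| by [].
have e0' : 0 < e by [].
have p0 : 0 < 2 * (`|y| + 1) by lra.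
exists (e / (2 * (`|y| + 1))); split; first by apply: divr_gt0.
apply: he; rewrite -ball_normE /ball_ /= opprB addrC subrK normrZ.
rewrite ger0_norm; last by apply: divr_ge0; lra.
rewrite mulrAC ltr_pdivrMr // ltr_pM2l //; lra.
Qed.

Section Main.
Variables (R : realType) (n k : nat) (C : set 'rV[R]_n) (phi : 'rV[R]_n)
  (psiF : set 'rV[R]_n -> 'rV[R]_n).
Hypotheses (PC : proper_cone C) (Hint : interior (dual_cone C) phi) (k0 : (0 < k)%N)
  (HF : forall F, facet (Kphi C phi) F ->
     dual_cone C (psiF F) /\
     F = [set x | Kphi C phi x /\ pairing (psiF F) x = 0]).
Variables (m : nat) (lam : 'I_m -> R) (psis : 'I_m -> 'I_k -> 'rV[R]_n)
  (xs : 'I_m -> 'rV[R]_n).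
Hypotheses (lam0 : forall i, 0 <= lam i) (psisD : forall i j, dual_cone C (psis i j))
  (xsC : forall i, C (xs i))
  (gE : gamma k phi = \sum_i lam i *: etensor (psis i) (xs i)).

Local Notation K := (Kphi C phi).

Lemma cclC : cclosed C.
Proof. by case: PC => -[C0 [CD CZ]] _ _ _; split. Qed.

Lemma C_sum q (c : 'I_q -> R) (w : 'I_q -> 'rV[R]_n) :
  (forall l, 0 <= c l) -> (forall l, C (w l)) -> C (\sum_l c l *: w l).
Proof. by move=> c0 Cw; apply: cclosed_sum cclC c0 _ => l _. Qed.

Lemma CZ {c : R} {y} : 0 <= c -> C y -> C (c *: y).
Proof. by case: cclC => _ _; apply. Qed.

Lemma phiD : dual_cone C phi.
Proof. exact: nbhs_singleton Hint. Qed.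

Lemma span_C a : (forall x, C x -> pairing a x = 0) -> a = 0.
Proof. by case: PC => _ _ _; apply. Qed.

Lemma pointed {x} : C x -> C (- x) -> x = 0.
Proof. by case: PC => _ _ + _; apply. Qed.

Lemma phi_pos {y} : C y -> y != 0 -> 0 < pairing phi y.
Proof.
move=> Cy y0; have [d [d0 hd]] := interior_ball y Hint.
have := hd y Cy; rewrite pairingBl pairingZl subr_ge0 => h.
apply: lt_le_trans h; apply: mulr_gt0 => //.
rewrite lt_neqAle pairing_self_ge0 andbT eq_sym; apply/eqP => /pairing_self_eq0 e.
by move: y0; rewrite e eqxx.
Qed.

Lemma K_C {y} : K y -> C y.
Proof. by case. Qed.

Lemma K_nz {y} : K y -> y != 0.
Proof. by case=> _ e; apply/eqP => y0; move: e; rewrite y0 pairing0r => /eqP; rewrite eq_sym oner_eq0. Qed.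

Lemma normK {y} : C y -> y != 0 -> K ((pairing phi y)^-1 *: y).
Proof.
move=> Cy y0; have p := phi_pos Cy y0; split.
  by apply: CZ => //; rewrite invr_ge0 ltW.
by rewrite pairingZr mulVf // gt_eqF.
Qed.

Lemma K_scale {y} : C y -> y != 0 -> y = pairing phi y *: ((pairing phi y)^-1 *: y).
Proof.
by move=> Cy y0; rewrite scalerA mulfV ?scale1r // gt_eqF // phi_pos.
Qed.

Lemma vanish_K a : (forall y, K y -> pairing a y = 0) -> a = 0.
Proof.
move=> h; apply: span_C => x Cx; case: (eqVneq x 0) => [->|x0]; first by rewrite pairing0r.
by rewrite (K_scale Cx x0) pairingZr (h _ (normK Cx x0)) mulr0.
Qed.

Lemma dual_of_K a c : (forall y, K y -> c <= pairing a y) -> dual_cone C (a - c *: phi).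
Proof.
move=> h x Cx; case: (eqVneq x 0) => [->|x0]; first by rewrite pairing0r.
rewrite (K_scale Cx x0) pairingZr; apply: mulr_ge0; first exact: ltW (phi_pos Cx x0).
have Kx := normK Cx x0; rewrite pairingBl pairingZl; case: Kx => _ ->.
by rewrite mulr1 subr_ge0; apply: h; apply: normK.
Qed.

Lemma prod_const_ne (j : 'I_k) (c : R) : \prod_(l | l != j) c = c ^+ k.-1.
Proof.
have -> : k.-1 = #|predC1 j| by rewrite cardC1 card_ord.
by rewrite -prodr_const; apply: eq_bigl => l; rewrite !inE.
Qed.

Lemma E1vec y : (pairing phi y) ^+ k.-1 *: y =
  \sum_i (lam i * \prod_j pairing (psis i j) y) *: xs i.
Proof.
apply: pairing_inj => a; rewrite !(pairingC a).
have := ev_gamma (k:=k) phi (fun=> y) a; rewrite gE ev_sum.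
under eq_bigr do rewrite ev_etensor.
under [in X in _ = X -> _]eq_bigr do rewrite prod_const_ne.
rewrite -mulr_suml sumr_const card_ord -[_ ^+ k.-1 *+ k]mulr_natl !mulrA mulVf ?mul1r; last first.
  by rewrite pnatr_eq0 -lt0n.
move=> h; rewrite pairingZl -h pairing_suml; apply: eq_bigr => i _.
by rewrite pairingZl mulrA.
Qed.

Lemma C_gen {y} : C y -> exists c : 'I_m -> R, (forall i, 0 <= c i) /\ y = \sum_i c i *: xs i.
Proof.
move=> Cy; case: (eqVneq y 0) => [->|y0].
  by exists (fun=> 0); split => // ; rewrite big1 // => i _; rewrite scale0r.
have p := phi_pos Cy y0.
have pk : 0 < pairing phi y ^+ k.-1 by apply: exprn_gt0.
exists (fun i => (pairing phi y ^+ k.-1)^-1 * (lam i * \prod_j pairing (psis i j) y)); split.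
  move=> i; apply: mulr_ge0; first by rewrite invr_ge0 ltW.
  by apply: mulr_ge0 => //; apply: prodr_ge0 => j _; apply: psisD.
have := E1vec y => /(congr1 (fun v => (pairing phi y ^+ k.-1)^-1 *: v)).
rewrite scalerA mulVf ?gt_eqF // scale1r => e; rewrite {1}e.
by rewrite scaler_sumr; apply: eq_bigr => i _; rewrite scalerA.
Qed.


Definition Kz (psi : 'rV[R]_n) := [set y | K y /\ pairing psi y = 0].

Lemma spanX d : (forall i, pairing d (xs i) = 0) -> d = 0.
Proof.
move=> h; apply: span_C => x Cx; have [c [_ ->]] := C_gen Cx.
by rewrite pairing_sumr big1 // => i _; rewrite pairingZr h mulr0.
Qed.

Lemma inD_dual psi : inD xs psi <-> dual_cone C psi.
Proof.
split => h.
  move=> x Cx; have [c [c0 ->]] := C_gen Cx.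
  by rewrite pairing_sumr; apply: sumr_ge0 => i _; rewrite pairingZr mulr_ge0.
by move=> i; apply: h.
Qed.

Lemma tight_in_Kz psi beta : dual_cone C psi ->
  (forall y, Kz psi y -> pairing beta y = 0) ->
  forall i, pairing psi (xs i) = 0 -> pairing (xs i) beta = 0.
Proof.
move=> Dpsi hb i e; rewrite pairingC.
case: (eqVneq (xs i) 0) => [->|x0]; first by rewrite pairing0r.
rewrite (K_scale (xsC i) x0) pairingZr hb ?mulr0 //; split; first exact: normK.
by rewrite pairingZr e mulr0.
Qed.

Lemma ann_prop psi beta : extr xs psi ->
  (forall y, Kz psi y -> pairing beta y = 0) -> exists c, beta = c *: psi.
Proof.
case=> hD psi0 rk hb; apply: (LA1 (M := tightmx xs psi)) => //.
  exact: tight_self.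
apply/tightmx_ann => i e; apply: (@tight_in_Kz psi beta _ hb i e); exact/inD_dual.
Qed.

Lemma facet_extr {psi} : extr xs psi -> facet K (Kz psi).
Proof.
move=> ex; have [hD psi0 rk] := ex; have Dpsi := (inD_dual psi).1 hD.
split.
- exists psi, 0; split => // y Ky; exact: Dpsi (K_C Ky).
- move=> e; move/eqP: psi0; apply; apply: vanish_K => y Ky.
  by rewrite -e in Ky; case: Ky.
- move=> G [a [c [ha ->]]] sub.
  have [l el] : exists l, a - c *: phi = l *: psi.
    apply: ann_prop => // y Kzy; have [Ky ay] := sub _ Kzy.
    by rewrite pairingBl pairingZl ay; case: Ky => _ ->; rewrite mulr1 subrr.
  have eK y : K y -> pairing a y - c = l * pairing psi y.
    move=> Ky; have := congr1 (fun v => pairing v y) el.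
    by rewrite /= pairingBl pairingZl pairingZl; case: Ky => _ ->; rewrite mulr1.
  case: (eqVneq l 0) => [l0|l0].
    right; apply/seteqP; split => y; first by case.
    by move=> Ky; split => //; apply/eqP; rewrite -subr_eq0 eK // l0 mul0r.
  left; apply/seteqP; split => y [Ky h].
    by split => //; move: (eK y Ky); rewrite h subrr => /esym/eqP; rewrite mulf_eq0 (negbTE l0) => /eqP.
  by split => //; apply/eqP; rewrite -subr_eq0 eK // h mulr0.
Qed.

Lemma psiF_extr {psi} : extr xs psi -> exists c, 0 < c /\ psi = c *: psiF (Kz psi).
Proof.
move=> ex; have [hD psi0 rk] := ex; have Dpsi := (inD_dual psi).1 hD.
have [DF eF] := HF _ (facet_extr ex).
have [l el] : exists l, psiF (Kz psi) = l *: psi.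
  apply: ann_prop => // y Kzy; have : Kz psi y by [].
  by rewrite {1}eF => -[].
have [y [Ky py]] : exists y, K y /\ 0 < pairing psi y.
  case: (pselect (exists y, K y /\ 0 < pairing psi y)) => // ne; exfalso.
  move/eqP: psi0; apply; apply: vanish_K => y Ky; apply/eqP; rewrite eq_le.
  rewrite (Dpsi _ (K_C Ky)) andbT leNgt; apply/negP => h; apply: ne; by exists y.
have l0 : 0 < l.
  have := DF _ (K_C Ky); rewrite el pairingZl pmulr_lge0 // le0r => /orP[/eqP l0|//].
  exfalso; have : Kz psi = K.
    rewrite eF el l0 scale0r; apply/seteqP; split => z; first by case.
    by move=> Kz0; split => //; rewrite pairing0l.
  by case: (facet_extr ex) => _ + _; apply.
exists l^-1; split; first by rewrite invr_gt0.
by rewrite el scalerA mulVf ?scale1r // gt_eqF.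
Qed.


Definition tset (psi : 'rV[R]_n) : {set 'I_m} := [set i | pairing psi (xs i) == 0].

Variable TF : {set 'I_m} -> 'rV[R]_n.
Hypothesis hTF : forall T, (extr xs (TF T) /\ tset (TF T) = T) \/
   (TF T = 0 /\ ~ exists psi, extr xs psi /\ tset psi = T).

Definition g' (i : 'I_#|{set 'I_m}|) := TF (enum_val i).

Lemma TF_D T : dual_cone C (TF T).
Proof.
case: (hTF T) => [[[hD _ _] _]|[-> _]]; first exact/inD_dual.
by move=> x _; rewrite pairing0l.
Qed.

Lemma extr_TF {psi} : extr xs psi -> exists c, 0 < c /\ psi = c *: g' (enum_rank (tset psi)).
Proof.
move=> ex; rewrite /g' enum_rankK.
case: (hTF (tset psi)) => [[exT eT]|[_ ne]]; last by exfalso; apply: ne; exists psi.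
have [hD psi0 rk] := ex; have [hDT T0 _] := exT.
have [c ec] : exists c, psi = c *: TF (tset psi).
  apply: (LA1 (M := tightmx xs psi)) => //; last exact: tight_self.
  apply/tightmx_ann => i e; rewrite pairingC; apply/eqP.
  have : i \in tset (TF (tset psi)) by rewrite eT inE e.
  by rewrite inE.
exists c; split => //.
have := posc spanX psi hD psi0; rewrite ec pairingZl.
by rewrite pmulr_lgt0 // (posc spanX _ hDT T0).
Qed.

Lemma P_to_C x : (forall i, 0 <= pairing (g' i) x) -> C x.
Proof.
move=> hx.
have [c [c0 ->]] : exists c : 'I_m -> R, (forall i, 0 <= c i) /\ x = \sum_i c i *: xs i.
  apply: farkas => psi hpsi; rewrite pairingC.
  have hD : inD xs psi by move=> i; rewrite pairingC.
  have : ncomb (extr xs) psi by exact: RI spanX psi hD.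
  apply: (ncomb_sub _ [set w | 0 <= pairing w x]).
    split => /=; first by rewrite pairing0l.
      by move=> u v hu hv; rewrite pairingDl addr_ge0.
    by move=> a u a0 hu; rewrite pairingZl mulr_ge0.
  move=> w ex; have [a [a0 ->]] := extr_TF ex.
  by rewrite /= pairingZl mulr_ge0 // ltW.
exact: C_sum.
Qed.

Lemma C_to_P x : C x -> forall i, 0 <= pairing (g' i) x.
Proof. by move=> Cx i; apply: TF_D. Qed.

Lemma spanG d : (forall i, pairing d (g' i) = 0) -> d = 0.
Proof.
move=> h; apply: pointed; apply: P_to_C => i; rewrite pairingC ?pairingNl h ?oppr0 //.
Qed.

Lemma inDG x : inD g' x <-> C x.
Proof.
split => h; first by apply: P_to_C => i; rewrite pairingC.
by move=> i; rewrite pairingC; apply: C_to_P.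
Qed.

Lemma vertex_extr {x} : extr g' x -> vertex K ((pairing phi x)^-1 *: x).
Proof.
case=> hD x0 rk; have Cx := (inDG x).1 hD.
have px := phi_pos Cx x0.
pose alpha := \sum_(i | pairing x (g' i) == 0) g' i.
exists alpha, 0; split.
  move=> y Ky; rewrite pairing_suml; apply: sumr_ge0 => i _.
  exact: C_to_P (K_C Ky) i.
apply/seteqP; split => y.
  move=> /= ->; split; first exact: normK.
  rewrite pairing_suml big1 // => i /eqP e.
  by rewrite pairingZr (pairingC (g' i)) e mulr0.
move=> [Ky ay].
have tg i : pairing x (g' i) = 0 -> pairing (g' i) y = 0.
  move=> e; move: ay; rewrite pairing_suml => ay.
  apply: (psumr_eq0P (P := fun i => pairing x (g' i) == 0)) ay _ _; last exact/eqP.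
  by move=> j _; apply: C_to_P (K_C Ky) j.
have [c ec] : exists c, y = c *: x.
  apply: (LA1 (M := tightmx g' x)) => //; first exact: tight_self.
  by apply/tightmx_ann.
move: Ky; rewrite ec => -[_]; rewrite pairingZr => e.
rewrite /= (_ : c = (pairing phi x)^-1) //.
by rewrite -[c]mulr1 -(mulfV (lt0r_neq0 px)) mulrA e mul1r.
Qed.


Lemma Eprop {i alpha} {G : set 'rV[R]_n} : 0 < lam i -> dual_cone C alpha ->
  (forall y, G y -> C y /\ pairing alpha y = 0) -> pairing alpha (xs i) != 0 ->
  exists j, forall y, G y -> pairing (psis i j) y = 0.
Proof.
move=> li Da hG ai.
case: (pselect (exists j, forall y, G y -> pairing (psis i j) y = 0)) => // ne; exfalso.
have H : forall j, exists y, G y /\ pairing (psis i j) y != 0.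
  move=> j; case: (pselect (exists y, G y /\ pairing (psis i j) y != 0)) => // ne2.
  exfalso; apply: ne; exists j => y Gy; apply/eqP; rewrite -[_ == _]negbK; apply/negP => h.
  by apply: ne2; exists y.
have [ys hys] := choice H.
have := ev_gamma (k:=k) phi ys alpha; rewrite gE ev_sum.
under eq_bigr do rewrite ev_etensor.
rewrite [in X in _ = X -> _]big1 ?mulr0; last first.
  by move=> j _; rewrite pairingC (hG _ (hys j).1).2 mulr0.
move=> h0.
have nn : forall i', 0 <= lam i' * ((\prod_j pairing (psis i' j) (ys j)) * pairing (xs i') alpha).
  move=> i'; apply: mulr_ge0 => //; apply: mulr_ge0.
    by apply: prodr_ge0 => j _; apply: psisD; exact: (hG _ (hys j).1).1.
  by rewrite pairingC; apply: Da.
have := psumr_eq0P (fun i' _ => nn i') h0 (i := i) isT.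
move/eqP; rewrite !mulf_eq0 (gt_eqF li) /= pairingC (negbTE ai) orbF.
move/prodf_eq0 => [j _ /eqP e].
by move: (hys j).2; rewrite e eqxx.
Qed.

Lemma ncombA psi : dual_cone C psi ->
  ncomb [set ph | exists F, [/\ facet K F,
     [set y | K y /\ pairing psi y = 0] `<=` F & ph = psiF F]] psi.
Proof.
move=> Dpsi; have [q [mu [w [mu0 ex ew]]]] := RI spanX psi ((inD_dual psi).2 Dpsi).
have H : forall l, exists cF : R * set 'rV[R]_n, 0 < mu l ->
    [/\ 0 < cF.1, facet K cF.2, [set y | K y /\ pairing psi y = 0] `<=` cF.2 &
        w l = cF.1 *: psiF cF.2].
  move=> l; case: (ltP 0 (mu l)) => ml; last by exists (0, set0).
  have exl := ex l ml; have [c [c0 ec]] := psiF_extr exl.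
  exists (c, Kz (w l)) => _; split => //=; first exact: facet_extr.
  move=> y [Ky py]; split => //.
  have nn l0 : 0 <= mu l0 * pairing (w l0) y.
    case: (ltP 0 (mu l0)) => m0.
      have [hD0 _ _] := ex l0 m0; apply: mulr_ge0 => //.
      by apply: ((inD_dual (w l0)).1 hD0); exact: K_C.
    have -> : mu l0 = 0 by apply/eqP; rewrite eq_le m0 mu0.
    by rewrite mul0r.
  have hs : \sum_l0 mu l0 * pairing (w l0) y = 0.
    by rewrite -[RHS]py ew pairing_suml; apply: eq_bigr => l0 _; rewrite pairingZl.
  have := psumr_eq0P (fun l0 _ => nn l0) hs (i := l) isT.
  by move/eqP; rewrite mulf_eq0 (gt_eqF ml) /= => /eqP.
have [cf hcf] := choice H.
exists q, (fun l => mu l * (cf l).1), (fun l => psiF (cf l).2); split.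
- move=> l; case: (ltP 0 (mu l)) => ml.
    by have [c0 _ _ _] := hcf l ml; apply: mulr_ge0 => //; apply: ltW.
  have -> : mu l = 0 by apply/eqP; rewrite eq_le ml mu0.
  by rewrite mul0r.
- move=> l; case: (ltP 0 (mu l)) => ml.
    by have [_ fF sF _] := hcf l ml; exists (cf l).2.
  have -> : mu l = 0 by apply/eqP; rewrite eq_le ml mu0.
  by rewrite mul0r ltxx.
- rewrite ew; apply: eq_bigr => l _; case: (ltP 0 (mu l)) => ml.
    by have [_ _ _ ->] := hcf l ml; rewrite scalerA.
  have -> : mu l = 0 by apply/eqP; rewrite eq_le ml mu0.
  by rewrite !scale0r mul0r scale0r.
Qed.

Lemma ncombB x : C x ->
  ncomb [set v | [/\ vertex K v, K v &
     forall alpha, dual_cone C alpha -> pairing alpha x = 0 -> pairing alpha v = 0]] x.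
Proof.
move=> Cx; have [q [mu [w [mu0 ex ew]]]] := RI spanG x ((inDG x).2 Cx).
have Cw l : 0 < mu l -> C (w l) by move=> ml; have [hD _ _] := ex l ml; exact/inDG.
exists q, (fun l => mu l * pairing phi (w l)), (fun l => (pairing phi (w l))^-1 *: w l); split.
- move=> l; case: (ltP 0 (mu l)) => ml.
    by apply: mulr_ge0 => //; apply: phiD; apply: Cw.
  have -> : mu l = 0 by apply/eqP; rewrite eq_le ml mu0.
  by rewrite mul0r.
- move=> l pl.
  have ml : 0 < mu l.
    rewrite lt_neqAle mu0 andbT eq_sym; apply/eqP => e; move: pl; by rewrite e mul0r ltxx.
  have [hD w0 rk] := ex l ml.
  split; first exact: vertex_extr.
    exact: normK (Cw l ml) w0.
  move=> alpha Da ax; rewrite pairingZr.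
  have nn l0 : 0 <= mu l0 * pairing alpha (w l0).
    case: (ltP 0 (mu l0)) => m0; first by apply: mulr_ge0 => //; apply: Da; apply: Cw.
    have -> : mu l0 = 0 by apply/eqP; rewrite eq_le m0 mu0.
    by rewrite mul0r.
  have hs : \sum_l0 mu l0 * pairing alpha (w l0) = 0.
    by rewrite -[RHS]ax ew pairing_sumr; apply: eq_bigr => l0 _; rewrite pairingZr.
  have := psumr_eq0P (fun l0 _ => nn l0) hs (i := l) isT.
  by move/eqP; rewrite mulf_eq0 (gt_eqF ml) /= => /eqP ->; rewrite mulr0.
- rewrite ew; apply: eq_bigr => l _; rewrite -scalerA.
  case: (ltP 0 (mu l)) => ml.
    have [hD w0 _] := ex l ml.
    by rewrite -(K_scale (Cw l ml) w0).
  have -> : mu l = 0 by apply/eqP; rewrite eq_le ml mu0.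
  by rewrite !scale0r.
Qed.


Lemma cclosed_cone_gen (S : set (tensor R k n)) : cclosed (cone_gen S).
Proof.
split.
- by exists 0%N, (fun=> 0), (fun=> 0); split; [by case|by case|by rewrite big_ord0].
- move=> u v [q1 [mu1 [w1 [m1 A1 ->]]]] [q2 [mu2 [w2 [m2 A2 ->]]]].
  exists (q1 + q2)%N, (fun i => match fintype.split i with inl l => mu1 l | inr l => mu2 l end),
    (fun i => match fintype.split i with inl l => w1 l | inr l => w2 l end); split.
  + by move=> i; case: fintype.split.
  + by move=> i; case: fintype.split => l; [apply: A1|apply: A2].
  + rewrite big_split_ord /=; congr (_ + _); apply: eq_bigr => l _.
      by rewrite (unsplitK (inl l)).
    by rewrite (unsplitK (inr l)).
- move=> c u c0 [q [mu [w [m0 Aw ->]]]].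
  exists q, (fun l => c * mu l), w; split => //.
  + by move=> l; apply: mulr_ge0.
  + by rewrite scaler_sumr; apply: eq_bigr => l _; rewrite scalerA.
Qed.

Lemma cone_gen_gen (S : set (tensor R k n)) t : S t -> cone_gen S t.
Proof.
move=> St; exists 1%N, (fun=> 1), (fun=> t); split => //.
by rewrite big_ord1 scale1r.
Qed.

Definition Sadm := [set t : tensor R k n | exists (Fs : 'I_k -> set 'rV[R]_n) (x : 'rV[R]_n),
                      admissible K Fs x /\ t = etensor (fun j => psiF (Fs j)) x].

Lemma term_cone i : 0 < lam i -> cone_gen Sadm (etensor (psis i) (xs i)).
Proof.
move=> li.
apply: (etensor_ncomb (cone_gen Sadm) (fun j => [set ph | exists F, [/\ facet K F,
     [set y | K y /\ pairing (psis i j) y = 0] `<=` F & ph = psiF F]])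
  [set v | [/\ vertex K v, K v &
     forall alpha, dual_cone C alpha -> pairing alpha (xs i) = 0 -> pairing alpha v = 0]]).
- exact: cclosed_cone_gen.
- by move=> j; apply: ncombA.
- exact: ncombB.
move=> phs v hA [vv Kv hv].
have [Fs hFs] := choice hA.
have -> : phs = (fun j => psiF (Fs j)) by apply: funext => j; case: (hFs j) => _ _ ->.
apply: cone_gen_gen; exists Fs, v; split => //.
split => [j|//|G fG nGv]; first by case: (hFs j).
have [DG eG] := HF G fG.
have pv : pairing (psiF G) v != 0.
  by apply/eqP => e; apply: nGv; rewrite eG.
have px : pairing (psiF G) (xs i) != 0.
  by apply/eqP => e; move/eqP: pv; apply; apply: hv.
have hG : forall y, G y -> C y /\ pairing (psiF G) y = 0.
  by move=> y; rewrite {1}eG => -[Ky e]; split => //; exact: K_C.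
have [j hj] := Eprop li DG hG px.
exists j; have [[fFj nFj _] sFj _] := hFs j.
have sub : G `<=` Fs j.
  move=> y Gy; apply: sFj; split; last exact: hj.
  by move: Gy; rewrite {1}eG => -[].
case: fG => _ _ maxG; case: (maxG (Fs j) fFj sub) => // eK.
Qed.

Lemma gamma_cone : cone_gen Sadm (gamma k phi).
Proof.
rewrite gE; apply: cclosed_sum => //; first exact: cclosed_cone_gen.
by move=> i; apply: term_cone.
Qed.

End Main.

Theorem lemma4 (R : realType) (n k : nat) (C : set 'rV[R]_n) (phi : 'rV[R]_n)
  (psiF : set 'rV[R]_n -> 'rV[R]_n) :
  proper_cone C ->
  interior (dual_cone C) phi ->
  (0 < k)%N ->
  entanglement_breaking k C phi ->
  (forall F, facet (Kphi C phi) F ->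
     dual_cone C (psiF F) /\
     F = [set x | Kphi C phi x /\ pairing (psiF F) x = 0]) ->
  cone_gen [set t | exists (Fs : 'I_k -> set 'rV[R]_n) (x : 'rV[R]_n),
                      admissible (Kphi C phi) Fs x /\
                      t = etensor (fun j => psiF (Fs j)) x]
           (gamma k phi).
Proof.
move=> PC Hint k0 [m [lam [psis [xs [lam0 _ psisD xsC gE]]]]] HF.
have H : forall T : {set 'I_m}, exists psi : 'rV[R]_n,
   (extr xs psi /\ tset R n m xs psi = T) \/
   (psi = 0 /\ ~ exists psi', extr xs psi' /\ tset R n m xs psi' = T).
  move=> T; case: (pselect (exists psi', extr xs psi' /\ tset R n m xs psi' = T)).
    by move=> [psi hpsi]; exists psi; left.
  by move=> ne; exists 0; right.
have [TF hTF] := choice H.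
exact: (@gamma_cone R n k C phi psiF PC Hint k0 HF m lam psis xs lam0 psisD xsC gE TF hTF).
Qed.
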